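(* (i) Let $d\ge0$ be an integer and let $p$ be the real polynomial of degree at most $d$ minimizing $$\int_0^1\bigl(1-q(z)z\bigr)^2\,dz$$ over all real polynomials $q$ of degree at most $d$. Then $p(z)>0$ for all $z\in(0,1]$. (ii) Let $d\ge0$ be an integer and $0<\mu<1$, and let $T_{d+1}$ be the Chebyshev polynomial of the first kind of degree $d+1$. Define $$r(z)=\frac{T_{d+1}\!\left(\frac{1+\mu-2z}{1-\mu}\right)}{T_{d+1}\!\left(\frac{1+\mu}{1-\mu}\right)},\qquad p(z)=\frac{1-r(z)}{z}.$$ Then $p$ is a polynomial of degree $d$ and $p(z)>0$ for all $z\in(0,1]$.
   Context: The Chebyshev polynomial of the first kind $T_k$ is the polynomial satisfying $T_k(\cos\theta)=\cos(k\theta)$. *)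

(* Defs.v *)
From Stdlib Require Import Reals.
From Coquelicot Require Import Coquelicot.
From mathcomp Require Import all_boot all_algebra.
From mathcomp Require Import Rstruct.

Local Open Scope ring_scope.

(* Pairs (T_k, T_{k+1}) of Chebyshev polynomials of the first kind,
   via T_0 = 1, T_1 = X, T_{k+2} = 2 X T_{k+1} - T_k
   (the unique polynomials with T_k(cos t) = cos(k t)). *)
Fixpoint chebT_pair (k : nat) : {poly R} * {poly R} :=
  match k with
  | O => (1, 'X)
  | S k' => let: (a, b) := chebT_pair k' in (b, 2%:R *: ('X * b) - a)
  end.

Definition chebT (k : nat) : {poly R} := (chebT_pair k).1.

Local Close Scope ring_scope.
Local Open Scope R_scope.

Definition lsq_obj (q : {poly R}) : R :=
  RInt (fun z => (1 - horner q z * z) ^ 2) 0 1.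

Definition cheb_r (d : nat) (mu z : R) : R :=
  horner (chebT (S d)) ((1 + mu - 2 * z) / (1 - mu))
  / horner (chebT (S d)) ((1 + mu) / (1 - mu)).

(* Main.v *)
Require Import Defs.
From Stdlib Require Import Reals.
From Coquelicot Require Import Coquelicot.
From mathcomp Require Import all_boot all_algebra.
From mathcomp Require Import Rstruct.
From mathcomp Require Import all_order ring lra.
Import Order.Theory GRing.Theory Num.Theory.

Module Aux.
Local Open Scope ring_scope.

Lemma dext (f g : R -> R) x l : (forall t, f t = g t) -> is_derive f x l -> is_derive g x l.
Proof. exact: (@is_derive_ext R_AbsRing R_NormedModule). Qed.

Lemma hder (p : {poly R}) x : is_derive (fun t => p.[t]) x p^`().[x].
Proof.
elim/poly_ind: p => [|p c IH].
  rewrite deriv0 horner0.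
  apply: (dext (fun _ => 0%R)); first by move=> t; rewrite horner0.
  exact: (@is_derive_const R_AbsRing R_NormedModule).
rewrite derivMXaddC.
apply: (dext (fun t => p.[t] * t + c)).
  by move=> t; rewrite hornerMXaddC.
have H := is_derive_plus _ _ x _ _ (is_derive_mult _ _ x _ _ IH (is_derive_id x) Rmult_comm) (is_derive_const c x).
have -> : (p + p^`() * 'X).[x] = Hierarchy.plus (Hierarchy.plus (Hierarchy.mult p^`().[x] x) (Hierarchy.mult p.[x] Hierarchy.one)) Hierarchy.zero.
  rewrite hornerD hornerM hornerX.
  change (p.[x] + p^`().[x] * x = p^`().[x] * x + p.[x] * 1 + 0); ring.
exact: H.
Qed.

Lemma hcont (p : {poly R}) x : continuous (fun t => p.[t]) x.
Proof. apply: ex_derive_continuous. eexists; exact: hder. Qed.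

Lemma hRInt (p : {poly R}) a b : is_RInt (fun t => p^`().[t]) a b (p.[b] - p.[a]).
Proof.
have := is_RInt_derive (fun t => p.[t]) (fun t => p^`().[t]) a b
  (fun x _ => hder p x) (fun x _ => hcont _ x).
done.
Qed.

Definition prim (f : {poly R}) : {poly R} :=
  \poly_(i < (size f).+1) (if i is j.+1 then f`_j / j.+1%:R else 0).

Lemma prim_deriv f : (prim f)^`() = f.
Proof.
apply/polyP => i; rewrite coef_deriv coef_poly ltnS.
case: ltnP => Hi.
  rewrite -(mulr_natr (f`_i / _)) divfK //; by rewrite pnatr_eq0.
by rewrite mul0rn nth_default.
Qed.

Lemma is_RInt_poly f a b : is_RInt (fun t => f.[t]) a b ((prim f).[b] - (prim f).[a]).
Proof. have := hRInt (prim f) a b; by rewrite prim_deriv. Qed.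

Definition I (f : {poly R}) : R := RInt (fun t => f.[t]) 0 1.

Lemma IE f : I f = (prim f).[1] - (prim f).[0].
Proof. exact: is_RInt_unique (is_RInt_poly f 0 1). Qed.

Lemma I_deriv h : I h^`() = h.[1] - h.[0].
Proof. exact: is_RInt_unique (hRInt h 0 1). Qed.

Lemma ID f g : I (f + g) = I f + I g.
Proof.
apply: is_RInt_unique.
apply: (is_RInt_ext (fun t => Hierarchy.plus f.[t] g.[t])).
  by move=> x _; rewrite hornerD.
rewrite !IE; exact: is_RInt_plus (is_RInt_poly f 0 1) (is_RInt_poly g 0 1).
Qed.

Lemma IZ c f : I (c *: f) = c * I f.
Proof.
apply: is_RInt_unique.
apply: (is_RInt_ext (fun t => Hierarchy.scal c f.[t])).
  by move=> x _; rewrite hornerZ.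
rewrite !IE; exact: is_RInt_scal (is_RInt_poly f 0 1).
Qed.

Lemma IN f : I (- f) = - I f.
Proof. by rewrite -scaleN1r IZ mulN1r. Qed.

Lemma IB f g : I (f - g) = I f - I g.
Proof. by rewrite ID IN. Qed.

Lemma IC c : I c%:P = c.
Proof.
rewrite -alg_polyC IZ.
have -> : (1 : {poly R}) = ('X)^`() by rewrite derivX.
by rewrite I_deriv !hornerX subr0 mulr1.
Qed.

Lemma I_ge0 f : (forall x, 0 < x < 1 -> 0 <= f.[x]) -> 0 <= I f.
Proof.
move=> H; apply/RleP; apply: RInt_ge_0.
- by apply/RleP; rewrite ler01.
- eexists; exact: is_RInt_poly.
- move=> x [h1 h2]; apply/RleP; apply: H; apply/andP; split; apply/RltP => //.
Qed.

Lemma mono (p : {poly R}) a b : a <= b ->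
  (forall x, a < x < b -> 0 <= p^`().[x]) -> p.[a] <= p.[b].
Proof.
move=> hab H; rewrite -subr_ge0.
rewrite -(is_RInt_unique _ _ _ _ (hRInt p a b)).
apply/RleP; apply: RInt_ge_0.
- exact/RleP.
- eexists; exact: hRInt.
- move=> x [h1 h2]; apply/RleP; apply: H; apply/andP; split; apply/RltP => //.
Qed.

Lemma poly_interval_zero (p : {poly R}) a b : a < b ->
  (forall x, a < x < b -> p.[x] = 0) -> p = 0.
Proof.
move=> hab H; apply/eqP; apply/negPn/negP => hp.
pose rs := [seq a + (b - a) / (k.+2)%:R | k <- iota 0 (size p)].
have := max_poly_roots hp (rs := rs).
rewrite size_map size_iota ltnn => K; suff: false by []; apply: K.
- apply/allP => x /mapP [k _ ->]; apply/rootP; apply: H.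
  have hk : 0 < (k.+2)%:R :> R by rewrite ltr0n.
  have hk1 : 1 < (k.+2)%:R :> R by rewrite ltr1n.
  have h1 : 0 < (b - a) / (k.+2)%:R by rewrite divr_gt0 // subr_gt0.
  have h2 : (b - a) / (k.+2)%:R < b - a.
    by rewrite ltr_pdivrMr // ltr_pMr // subr_gt0.
  move: h1 h2; set t := (b - a) / _ => h1 h2; apply/andP; split; lra.
- rewrite map_inj_uniq; first exact: iota_uniq.
  move=> m n /= /addrI E.
  have hba : b - a != 0 by rewrite subr_eq0; apply/eqP => E2; move: hab; rewrite E2 ltxx.
  move: E => /(congr1 (fun t => (b - a) / t)).
  rewrite !invf_div !mulrA ![(b - a) * _]mulrC !mulfK //.
  by move/eqP; rewrite eqr_nat => /eqP [].
Qed.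

Lemma I_eq0 f : (forall x, 0 < x < 1 -> 0 <= f.[x]) -> I f = 0 -> f = 0.
Proof.
move=> H I0; rewrite -(prim_deriv f).
have E : forall x, 0 < x < 1 -> (prim f - ((prim f).[0])%:P).[x] = 0.
  move=> x /andP [h1 h2].
  have A1 : (prim f).[0] <= (prim f).[x].
    apply: mono; first lra. move=> y /andP [y1 y2]; rewrite prim_deriv; apply: H; apply/andP; split; lra.
  have A2 : (prim f).[x] <= (prim f).[1].
    apply: mono; first lra. move=> y /andP [y1 y2]; rewrite prim_deriv; apply: H; apply/andP; split; lra.
  move: I0; rewrite IE => I0.
  rewrite hornerD hornerN hornerC; lra.
have := @poly_interval_zero _ 0 1 ltr01 E.
move/eqP; rewrite subr_eq0 => /eqP ->.
by rewrite derivC.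
Qed.

Lemma I_ext f g : (forall x, f.[x] = g.[x]) -> I f = I g.
Proof. by move=> H; rewrite /I; apply: RInt_ext => x _; rewrite H. Qed.

Lemma I_refl f g : (forall x, g.[x] = f.[1 - x]) -> I g = I f.
Proof.
move=> H.
have -> : I g = I ((- (prim f \Po (1 - 'X)))^`()).
  apply: I_ext => x.
  rewrite derivN deriv_comp prim_deriv derivB derivX derivC sub0r.
  by rewrite hornerN hornerM horner_comp hornerN hornerC hornerD hornerN hornerX hornerC H mulrN1 opprK.
rewrite I_deriv IE !hornerN !horner_comp !hornerD !hornerN !hornerX !hornerC subrr subr0.
by rewrite opprK addrC.
Qed.


Definition L (y : {poly R}) : {poly R} :=
  'X * y^`()^`() - 'X * ('X * y^`()^`()) + y^`() *+ 2 - ('X * y^`()) *+ 3.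

Lemma coefL y k : (L y)`_k = y`_k.+1 *+ (k.+1 * k.+2) - y`_k *+ (k * k.+2).
Proof.
rewrite /L !coefD !coefN !coefMn !coefXM !coef_deriv.
case: k => [|[|m]] /=.
- ring.
- ring.
- ring.
Qed.

Lemma divX (f : {poly R}) n : (size f <= n.+1)%N -> f.[0] = 0 ->
  exists q : {poly R}, (size q <= n)%N /\ f = 'X * q.
Proof.
move=> hs h0.
have /factor_theorem [q Eq] : root f 0 by apply/rootP.
exists q; split; last by rewrite Eq subr0 mulrC.
apply/leq_sizeP => j hj.
move/leq_sizeP: hs => /(_ j.+1 hj).
by rewrite Eq subr0 coefMX.
Qed.

Lemma size_L (q : {poly R}) n : (size q <= n)%N -> (size (L q) <= n)%N.
Proof.
move/leq_sizeP => H; apply/leq_sizeP => j hj.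
by rewrite coefL (H j.+1) ?(H j) ?mul0rn ?subrr // (leq_trans hj).
Qed.

Lemma I_polyC c f : I (c%:P * f) = c * I f.
Proof. by rewrite mul_polyC IZ. Qed.

Lemma deriv1' : (1 : {poly R})^`() = 0.
Proof. by rewrite -polyC1 derivC. Qed.

Lemma sym f g : I ('X * L f * g) = - I ('X * 'X * (1 - 'X) * f^`() * g^`()).
Proof.
pose M := 'X * 'X * (1 - 'X) * f^`().
have E : 'X * L f * g = (M * g)^`() - M * g^`().
  rewrite /M /L !derivM derivB derivX deriv1'. ring.
rewrite E IB I_deriv /M !hornerM !hornerD !hornerN !hornerX !hornerC.
by rewrite subrr !mulr0 !mul0r !subr0 sub0r.
Qed.

Lemma I_mulrn f k : I (f *+ k) = I f *+ k.
Proof. by rewrite -scaler_nat IZ mulr_natl. Qed.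

Lemma ode (n : nat) (r : {poly R}) : (size r <= n.+1)%N ->
  (forall q : {poly R}, (size q <= n)%N -> I (r * ('X * q)) = 0) ->
  L r + r *+ (n * n.+2) = 0.
Proof.
move=> hs O.
set h := L r + r *+ (n * n.+2).
have sh : (size h <= n)%N.
  apply/leq_sizeP => j hj.
  move/leq_sizeP: hs => hs.
  rewrite /h coefD coefL coefMn (hs j.+1) // mul0rn sub0r.
  case: (ltngtP j n) => [hlt|hjn|->]; first by move: hj; rewrite leqNgt hlt.
    by rewrite hs // !mul0rn oppr0 add0r.
  by rewrite addrC subrr.
have orth : forall q : {poly R}, (size q <= n)%N -> I ('X * h * q) = 0.
  move=> q hq.
  have -> : 'X * h * q = 'X * L r * q + (r * ('X * q)) *+ (n * n.+2) by rewrite /h; ring.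
  rewrite ID I_mulrn O // mul0rn addr0 sym.
  have -> : 'X * 'X * (1 - 'X) * r^`() * q^`() = 'X * 'X * (1 - 'X) * q^`() * r^`() by ring.
  rewrite -sym.
  have -> : 'X * L q * r = r * ('X * L q) by ring.
  by rewrite O // size_L.
have := orth h sh.
move/I_eq0 => H.
have : 'X * h * h = 0.
  apply: H => x /andP [x0 x1]; rewrite !hornerM hornerX.
  have hx : 0 <= x by lra. by rewrite -mulrA mulr_ge0 // -expr2 sqr_ge0.
move/eqP; rewrite !mulf_eq0 polyX_eq0 /= orbb => /eqP //.
Qed.

Lemma sonin_deriv (r : {poly R}) k : L r + r *+ k = 0 ->
  (r * r *+ k + 'X * (1 - 'X) * (r^`() * r^`()))^`() = ('X *+ 4 - 3) * (r^`() * r^`()).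
Proof.
move=> hode.
have -> : (r * r *+ k + 'X * (1 - 'X) * (r^`() * r^`()))^`() =
  ('X *+ 4 - 3) * (r^`() * r^`()) + (r^`() * (L r + r *+ k)) *+ 2.
  rewrite /L !derivD !derivMn !derivM derivB derivX deriv1'. ring.
by rewrite hode mulr0 mul0rn addr0.
Qed.

Lemma I_sq_ge0 f : 0 <= I (f * f).
Proof. apply: I_ge0 => x _; by rewrite hornerM -expr2 sqr_ge0. Qed.

Lemma r1sq (n : nat) (r : {poly R}) : (0 < n)%N -> (size r <= n.+1)%N -> r.[0] = 1 ->
  (forall q : {poly R}, (size q <= n)%N -> I (r * ('X * q)) = 0) ->
  r.[1] ^+ 2 < 1.
Proof.
move=> hn hs r0 O.
set c := r.[1].
set t := r \Po (1 - 'X).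
have s2 : size (1 - 'X : {poly R}) = 2 by rewrite -opprB size_opp -polyC1 size_XsubC.
have ht : forall x, t.[x] = r.[1 - x].
  by move=> x; rewrite horner_comp hornerD hornerN hornerX hornerC.
have st : (size t <= n.+1)%N by rewrite size_comp_poly2.
have [q0 [sq0 Eq0]] : exists q : {poly R}, (size q <= n)%N /\ r - 1 = 'X * q.
  apply: divX; first by rewrite (leq_trans (size_add _ _)) // geq_max hs size_opp size_poly1.
  by rewrite hornerD hornerN hornerC r0 subrr.
have [v [sv Ev]] : exists q : {poly R}, (size q <= n)%N /\ t - c%:P = 'X * q.
  apply: divX; first by rewrite (leq_trans (size_add _ _)) // geq_max st size_opp size_polyC; case: (c != 0).
  by rewrite hornerD hornerN hornerC ht subr0 subrr.
set A := I (r * r).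
have AE : A = I r.
  rewrite /A.
  have -> : r * r = r + r * ('X * q0) by rewrite -Eq0; ring.
  by rewrite ID O // addr0.
have tt : I (t * t) = A by apply: I_refl => x; rewrite !hornerM ht.
have rt : I (r * t) = c * A.
  have -> : r * t = c%:P * r + r * ('X * v) by rewrite -Ev; ring.
  by rewrite ID O // addr0 I_polyC AE.
have Apos : 0 < A.
  rewrite lt_def I_sq_ge0 andbT; apply/eqP => A0.
  have : r * r = 0 by apply: I_eq0 A0 => x _; rewrite hornerM -expr2 sqr_ge0.
  move/eqP; rewrite mulf_eq0 orbb => /eqP r00.
  by move: r0; rewrite r00 horner0 => /eqP; rewrite eq_sym oner_eq0.
have key : I ((r - c%:P * t) * (r - c%:P * t)) = A * (1 - c ^+ 2).
  have -> : (r - c%:P * t) * (r - c%:P * t) = r * r - (c * 2)%:P * (r * t) + (c ^+ 2)%:P * (t * t).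
    by rewrite polyCM rmorphXn /=; ring.
  rewrite ID IB !I_polyC rt tt -/A; ring.
have : 0 <= A * (1 - c ^+ 2) by rewrite -key I_sq_ge0.
rewrite pmulr_rge0 // subr_ge0 le_eqVlt => /orP [/eqP c1|] //.
exfalso.
have E : r - c%:P * t = 0.
  have : (r - c%:P * t) * (r - c%:P * t) = 0.
    apply: I_eq0; first by move=> x _; rewrite hornerM -expr2 sqr_ge0.
    by rewrite key c1 subrr mulr0.
  by move/eqP; rewrite mulf_eq0 orbb => /eqP.
have Er : r = c%:P * t by apply/eqP; rewrite -subr_eq0 E.
have I1 : I (r * 'X) = 0 by move: (O 1); rewrite mulr1 size_poly1; apply.
have I2 : I (r * (1 - 'X)) = 0.
  rewrite [in LHS]Er -mulrA I_polyC -[X in _ * X = _]/(I (t * (1 - 'X))).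
  rewrite (I_refl (r * 'X)) ?I1 ?mulr0 // => x.
  by rewrite !hornerM ht hornerD hornerN hornerX hornerC hornerX.
have : A = 0.
  by rewrite AE -[r in I r]mulr1 -(subrK 'X 1) mulrDr ID I2 I1 addr0.
by move=> A0; move: Apos; rewrite A0 ltxx.
Qed.

Lemma mono' (p : {poly R}) a b : a <= b ->
  (forall x, a < x < b -> p^`().[x] <= 0) -> p.[b] <= p.[a].
Proof.
move=> hab H; have := @mono (- p) a b hab.
rewrite !hornerN lerN2; apply => x hx; rewrite derivN hornerN oppr_ge0; exact: H.
Qed.

Lemma final (n : nat) (r : {poly R}) : (0 < n)%N -> (size r <= n.+1)%N -> r.[0] = 1 ->
  (forall q : {poly R}, (size q <= n)%N -> I (r * ('X * q)) = 0) ->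
  forall z, 0 < z <= 1 -> r.[z] < 1.
Proof.
move=> hn hs r0 O z /andP [z0 z1].
have c1 := @r1sq n r hn hs r0 O.
have hode := @ode n r hs O.
set k := (n * n.+2)%N in hode.
have lam0 : 0 < k%:R :> R by rewrite ltr0n /k muln_gt0 hn.
set S := r * r *+ k + 'X * (1 - 'X) * (r^`() * r^`()).
have dS := @sonin_deriv r k hode; rewrite -/S in dS.
have Sx : forall x, S.[x] = r.[x] ^+ 2 * k%:R + x * (1 - x) * r^`().[x] ^+ 2.
  move=> x; rewrite /S hornerD hornerMn !hornerM hornerD hornerN hornerX hornerC.
  by rewrite -mulr_natr !expr2.
have dSx : forall x, S^`().[x] = (4 * x - 3) * r^`().[x] ^+ 2.
  move=> x; rewrite dS hornerM hornerD hornerN hornerMn hornerX -polyC_natr hornerC hornerM expr2.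
  by rewrite -mulr_natl.
have low : forall x, 0 <= x <= 1 -> r.[x] ^+ 2 * k%:R <= S.[x].
  move=> x /andP [x0 x1]; rewrite Sx lerDl.
  by rewrite mulr_ge0 ?sqr_ge0 // mulr_ge0 // subr_ge0.
have S0 : S.[0] = k%:R by rewrite Sx r0 expr1n mul1r !mul0r addr0.
have S1 : S.[1] = r.[1] ^+ 2 * k%:R by rewrite Sx subrr mulr0 mul0r addr0.
have hz : 0 <= z <= 1 by apply/andP; split => //; exact: ltW.
case: (lerP (3 / 4) z) => hz34.
  have : S.[z] <= S.[1].
    apply: mono => // x /andP [x1 x2]; rewrite dSx mulr_ge0 ?sqr_ge0 //; lra.
  move: (low z hz); rewrite S1 => l1 l2.
  have : r.[z] ^+ 2 < 1.
    have : r.[z] ^+ 2 * k%:R < 1 * k%:R.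
      apply: (le_lt_trans (le_trans l1 l2)); by rewrite ltr_pM2r.
    by rewrite ltr_pM2r.
  move=> h; rewrite expr2 in h; nra.
have Sz : S.[z] <= S.[0].
  apply: mono' => [|x /andP [x1 x2]]; first exact: ltW.
  rewrite dSx nmulr_rle0 ?sqr_ge0 //; lra.
move: (low z hz) => l1.
have rz2 : r.[z] ^+ 2 <= 1.
  have : r.[z] ^+ 2 * k%:R <= 1 * k%:R by move: l1 Sz; rewrite S0 mul1r; lra.
  by rewrite ler_pM2r.
rewrite ltNge; apply/negP => rz.
have rz1 : r.[z] = 1 by rewrite expr2 in rz2; nra.
have SzE : S.[z] = k%:R by move: l1 Sz; rewrite S0 rz1 expr1n mul1r; lra.
have SC : S - (k%:R)%:P = 0.
  apply: (@poly_interval_zero _ 0 z z0) => x /andP [x0 xz].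
  rewrite hornerD hornerN hornerC; apply/eqP; rewrite subr_eq0 eq_le; apply/andP; split.
    rewrite -S0; apply: mono' => [|y /andP [y1 y2]]; first exact: ltW.
    rewrite dSx nmulr_rle0 ?sqr_ge0 //; lra.
  rewrite -SzE; apply: mono' => [|y /andP [y1 y2]]; first exact: ltW.
  rewrite dSx nmulr_rle0 ?sqr_ge0 //; lra.
have dS0 : ('X *+ 4 - 3) * (r^`() * r^`()) = 0.
  by rewrite -dS; move/eqP: SC; rewrite subr_eq0 => /eqP ->; rewrite derivC.
have r'0 : r^`() = 0.
  move/eqP: dS0; rewrite !mulf_eq0 orbb => /orP [/eqP H|/eqP //].
  have := congr1 (horner^~ 0) H; rewrite hornerD hornerN hornerMn hornerX horner0 mul0rn -polyC_natr hornerC sub0r.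
  by move/eqP; rewrite oppr_eq0 pnatr_eq0.
move: hode; rewrite /L r'0 deriv0 !mulr0 !mul0rn subrr add0r => rk.
have := congr1 (horner^~ 0) rk => /=; rewrite subr0 add0r hornerMn r0 horner0 => /eqP.
by rewrite pnatr_eq0 /k muln_eq0 orbF => /eqP n0; move: hn; rewrite n0.
Qed.

Lemma szP {f : {poly R}} {n j : nat} : (size f <= n)%N -> (n <= j)%N -> f`_j = 0.
Proof. by move/leq_sizeP; apply. Qed.

Lemma lsqE q : lsq_obj q = I ((1 - q * 'X) * (1 - q * 'X)).
Proof.
rewrite /lsq_obj /I; apply: RInt_ext => x _.
by rewrite RpowE expr2 !hornerE.
Qed.

Lemma part1' d (p : {poly R}) : (size p <= d.+1)%N ->
  (forall q : {poly R}, (size q <= d.+1)%N -> lsq_obj p <= lsq_obj q) ->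
  forall z : R, 0 < z -> z <= 1 -> 0 < p.[z].
Proof.
move=> hp hmin z z0 z1.
set r := 1 - p * 'X.
have hs : (size r <= d.+2)%N.
  apply/leq_sizeP => j hj; rewrite /r coefB coef1 coefMX.
  case: j hj => // j hj; rewrite (szP hp) // subrr //.
have r0 : r.[0] = 1 by rewrite /r !hornerE /=; lra.
have O : forall q : {poly R}, (size q <= d.+1)%N -> I (r * ('X * q)) = 0.
  move=> q hq.
  set B := I (r * ('X * q)).
  set C := I (('X * q) * ('X * q)).
  have C0 : 0 <= C by apply: I_sq_ge0.
  have ineq : forall t, 0 <= - (2 * t) * B + t ^+ 2 * C.
    move=> t.
    have hq' : (size (p + t *: q)%R <= d.+1)%N.
      apply/leq_sizeP => j hj; rewrite coefD coefZ (szP hp) // (szP hq) //.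
      by rewrite mulr0 addr0.
    have := hmin _ hq'; rewrite !lsqE.
    have -> : (1 - (p + t *: q) * 'X) * (1 - (p + t *: q) * 'X) =
       r * r + (- (2 * t))%:P * (r * ('X * q)) + (t ^+ 2)%:P * (('X * q) * ('X * q)).
      by rewrite -mul_polyC /r polyCN polyCM rmorphXn /=; ring.
    rewrite !ID !I_polyC -/B -/C; lra.
  have := ineq (B / (C + 1)).
  set u := B / (C + 1).
  have hB : B = u * (C + 1) by rewrite /u divfK // gt_eqF // ltr_wpDl.
  rewrite hB => h.
  have : u * u * (C + 2) <= 0 by nra.
  move=> h2.
  have uu : u * u <= 0.
    have hC2 : 0 < C + 2 by lra.
    by move: h2; rewrite pmulr_lle0.
  have u0 : u = 0 by nra.
  by rewrite u0 mul0r.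
have := @final d.+1 r (ltn0Sn _) hs r0 O z.
rewrite z0 z1 => /(_ isT).
rewrite /r !hornerE => h.
have : 0 < p.[z] * z by lra.
by rewrite pmulr_lgt0.
Qed.

Local Close Scope ring_scope.
Local Open Scope R_scope.

Lemma part1 d (p : {poly R}) : (size p <= d.+1)%N ->
  (forall q : {poly R}, (size q <= d.+1)%N -> lsq_obj p <= lsq_obj q) ->
  forall z : R, 0 < z <= 1 -> 0 < horner p z.
Proof.
move=> hp hmin z [z0 z1]; apply/RltP; apply: (@part1' d p hp).
- by move=> q hq; apply/RleP; apply: hmin.
- exact/RltP.
- exact/RleP.
Qed.

Local Open Scope ring_scope.

Lemma pairS k : chebT_pair k.+1 =
  ((chebT_pair k).2, 2%:R *: ('X * (chebT_pair k).2) - (chebT_pair k).1).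
Proof. by rewrite /=; case: (chebT_pair k). Qed.

Lemma pair_hornerS k x : (chebT_pair k.+1).1.[x] = (chebT_pair k).2.[x] /\
  (chebT_pair k.+1).2.[x] = 2 * x * (chebT_pair k).2.[x] - (chebT_pair k).1.[x].
Proof.
rewrite pairS /=; split => //.
by rewrite hornerD hornerN hornerZ hornerM hornerX mulrA.
Qed.

Lemma cheb_trig k t : (chebT_pair k).1.[cos t] = cos (k%:R * t) /\
  (chebT_pair k).2.[cos t] = cos (k.+1%:R * t).
Proof.
elim: k => [|k [IH1 IH2]].
  rewrite hornerC hornerX; split; first by rewrite mulr0n RmultE mul0r cos_0.
  by rewrite RmultE mulr1n mul1r.
have [E1 E2] := pair_hornerS k (cos t).
split; first by rewrite E1 IH2.
rewrite E2 IH1 IH2.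
have h1 := cosD (k.+1%:R * t) t.
have h2 := cosD (k.+1%:R * t) (- t).
rewrite cos_neg sin_neg in h2.
rewrite ?RmultE ?RplusE ?RoppE in h1 h2 *.
have -> : k.+2%:R * t = k.+1%:R * t + t by rewrite -addn1 natrD; ring.
have -> : k%:R * t = k.+1%:R * t + - t by rewrite -addn1 natrD; ring.
rewrite h1 h2; ring.
Qed.

Lemma cheb_le1 k x : -1 <= x <= 1 -> (chebT k).[x] <= 1.
Proof.
move=> /andP [h1 h2].
have hx : Rle (-1) x /\ Rle x 1 by split; apply/RleP.
rewrite /chebT -(cos_acos x hx) (cheb_trig k (acos x)).1.
have [_ h] := COS_bound (k%:R * acos x).
exact/RleP.
Qed.

Lemma cheb_ge1 k x y : 1 <= x -> x < y ->
  (1 <= (chebT_pair k).1.[x] /\ (chebT_pair k).1.[x] <= (chebT_pair k).2.[x]) /\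
  (1 <= (chebT_pair k).1.[y] /\ (chebT_pair k).1.[y] <= (chebT_pair k).2.[y]) /\
  (0 <= (chebT_pair k).1.[y] - (chebT_pair k).1.[x] /\ (chebT_pair k).1.[y] - (chebT_pair k).1.[x] <
           (chebT_pair k).2.[y] - (chebT_pair k).2.[x]).
Proof.
move=> hx hxy.
elim: k => [|k [[a1 a2] [[b1 b2] [c1 c2]]]].
  rewrite /= !hornerC !hornerX; lra.
have [E1 E2] := pair_hornerS k x.
have [F1 F2] := pair_hornerS k y.
rewrite E1 E2 F1 F2.
split; [split|split; [split|split]]; try lra; nra.
Qed.

Lemma cheb_size k : size (chebT_pair k).1 = k.+1 /\ size (chebT_pair k).2 = k.+2.
Proof.
elim: k => [|k [IH1 IH2]].
  by rewrite /= size_poly1 size_polyX.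
rewrite pairS /=; split => //.
have b0 : (chebT_pair k).2 != 0 by rewrite -size_poly_eq0 IH2.
have h2 : size (2%:R *: ('X * (chebT_pair k).2)) = k.+3.
  by rewrite size_scale ?pnatr_eq0 // mulrC size_mulX // IH2.
by rewrite size_addl h2 // size_opp IH1 ltnS leqW.
Qed.

Lemma chebT_S k : chebT k.+1 = (chebT_pair k).2.
Proof. by rewrite /chebT pairS. Qed.

Lemma part2' d mu : 0 < mu -> mu < 1 ->
  exists P : {poly R}, size P = d.+1 /\
    (forall z, z != 0 -> P.[z] = (1 - cheb_r d mu z) / z) /\
    (forall z, 0 < z -> z <= 1 -> 0 < P.[z]).
Proof.
move=> m0 m1.
set T := chebT d.+1.
set a := (1 - mu)^-1.
have a0 : 0 < a by rewrite invr_gt0 subr_gt0.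
have aE : (1 - mu) * a = 1 by rewrite mulfV // subr_eq0 eq_sym lt_eqF.
set x0 := (1 + mu) * a.
have x01 : 1 < x0 by rewrite /x0; nra.
set cT := T.[x0].
have cT1 : 1 < cT.
  have [[a1 a2] [_ [c1 c2]]] := cheb_ge1 d 1 x0 (lexx 1) x01.
  rewrite /cT /T chebT_S; lra.
have cT0 : cT != 0 by apply/eqP => h; move: cT1; rewrite h; lra.
set l := (- 2 * a)%:P * 'X + x0%:P.
have lz : forall z, l.[z] = - 2 * a * z + x0 by move=> z; rewrite /l hornerMXaddC hornerC.
have crE : forall z, cheb_r d mu z = T.[l.[z]] / cT.
  move=> z; rewrite /cheb_r lz /cT /x0 /T.
  rewrite ?RdivE ?RplusE ?RminusE ?RmultE.
  congr (_.[_] / _.[_]); rewrite /a; field; rewrite subr_eq0 eq_sym lt_eqF //.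
have sl : size l = 2.
  rewrite /l size_MXaddC polyC_eq0 mulf_eq0 oppr_eq0 pnatr_eq0 /= (gt_eqF a0) /=.
  by rewrite size_polyC mulf_neq0 ?oppr_eq0 ?pnatr_eq0 // gt_eqF.
have sT : size T = d.+2 by rewrite /T chebT_S (cheb_size d).2.
set F := 1 - (cT^-1)%:P * (T \Po l).
have sF : size F = d.+2.
  rewrite /F addrC size_addl size_opp size_Cmul ?invr_eq0 // size_comp_poly2 // sT //.
  by rewrite size_poly1.
have F0 : root F 0.
  apply/rootP; rewrite /F hornerD hornerN hornerC hornerM hornerC horner_comp lz.
  by rewrite mulr0 add0r mulVf // subrr.
have Fz : forall z, F.[z] = 1 - cheb_r d mu z.
  by move=> z; rewrite crE /F hornerD hornerN hornerC hornerM hornerC horner_comp mulrC.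
case/factor_theorem: F0 => P EP.
rewrite subr0 in EP.
have P0 : P != 0.
  apply/eqP => P0; move: sF; by rewrite EP P0 mul0r size_poly0.
exists P; split; first by move: sF; rewrite EP size_mulX // => [[]].
split.
  by move=> z z0; rewrite -Fz EP hornerMX mulfK.
move=> z z0 z1.
have hPz : P.[z] * z = 1 - cheb_r d mu z by rewrite -Fz EP hornerMX.
suff : cheb_r d mu z < 1.
  move=> h; have : 0 < P.[z] * z by lra.
  by rewrite pmulr_lgt0.
rewrite crE ltr_pdivrMr ?mul1r; last lra.
have lx0 : l.[z] < x0 by rewrite lz; nra.
have lm1 : -1 <= l.[z] by rewrite lz /x0; nra.
case: (lerP l.[z] 1) => hl.
  have := cheb_le1 d.+1 (l.[z]) ; rewrite lm1 hl /= => /(_ isT) h; rewrite /T; lra.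
have [_ [_ [c1 c2]]] := cheb_ge1 d (l.[z]) x0 (ltW hl) lx0.
rewrite /cT /T chebT_S; lra.
Qed.

Local Close Scope ring_scope.
Local Open Scope R_scope.

Lemma part2 d : forall mu : R, 0 < mu < 1 ->
      exists P : {poly R},
        size P = d.+1 /\
        (forall z : R, z <> 0 -> horner P z = (1 - cheb_r d mu z) / z) /\
        (forall z : R, 0 < z <= 1 -> 0 < horner P z).
Proof.
move=> mu [m0 m1].
have := @part2' d mu; case; [exact/RltP|exact/RltP|] => P [h1 [h2 h3]].
exists P; split => //; split.
  by move=> z hz; apply: h2; apply/eqP.
move=> z [z0 z1]; apply/RltP; apply: h3; [exact/RltP|exact/RleP].
Qed.

End Aux.

Local Open Scope R_scope.

Theorem mainTheorem6 (d : nat) :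
  (* (i) every minimizer of the least-squares objective over degree <= d is positive on (0,1] *)
  (forall p : {poly R},
      (size p <= d.+1)%N ->
      (forall q : {poly R}, (size q <= d.+1)%N -> lsq_obj p <= lsq_obj q) ->
      forall z : R, 0 < z <= 1 -> 0 < horner p z)
  /\
  (* (ii) the Chebyshev-based p(z) = (1 - r(z))/z is a polynomial of degree d, positive on (0,1] *)
  (forall mu : R, 0 < mu < 1 ->
      exists P : {poly R},
        size P = d.+1 /\
        (forall z : R, z <> 0 -> horner P z = (1 - cheb_r d mu z) / z) /\
        (forall z : R, 0 < z <= 1 -> 0 < horner P z)).
Proof.
split.
- exact: (@Aux.part1 d).
- exact: (@Aux.part2 d).
Qed.
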